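(* Let $N>3$. The maximum, over all behaviors $P\in\mathcal{J}_{N,2}$, of $$\frac{1}{N+1}P(0|0\cdots0)+\frac{1}{N+1}\sum_{k=1}^NP(1|e_k)-\frac{N}{N+1}$$ equals $$|\delta_{I2}|=\frac{2}{(N-2)(N-1)(N+1)},$$ and it is achieved by a behavior in $\mathcal{J}_{N,2}$ with $P(0|0\cdots0)=\frac{2}{N^2-3N+2}$ and $P(1|e_k)=1$ for all $k=1,\dots,N$.
   Context: A behavior on $N$ bits is a family $(P(a|\mathbf{x}))_{a\in\{0,1\},\mathbf{x}\in\{0,1\}^N}$ with $P(a|\mathbf{x})\ge0$ and $P(0|\mathbf{x})+P(1|\mathbf{x})=1$. $\mathcal{J}_{N,2}$ (the second-order interference set) is the set of behaviors satisfying, for every $M>2$, every subset $\{j_1,\dots,j_M\}\subseteq\{1,\dots,N\}$ and every fixed value of the remaining bits, $\sum_{x_{j_1},\dots,x_{j_M}\in\{0,1\}}(-1)^{\sum_lx_{j_l}}P(0|\mathbf{x})=0$. $e_k\in\{0,1\}^N$ is the string with a single $1$ in position $k$. *)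

(* Defs.v *)
From mathcomp Require Import all_boot all_order all_algebra.
Set Implicit Arguments. Unset Strict Implicit. Unset Printing Implicit Defensive.
Import Order.TTheory GRing.Theory Num.Theory.
Local Open Scope ring_scope.

(* Bit strings of length N: x : bits N, bit k is x k; bit value 0 = false, 1 = true. *)
Notation bits N := {ffun 'I_N -> bool}.

(* A behavior: P a x is P(a|x), with a : bool (false = 0, true = 1). *)
Definition is_behavior (R : numDomainType) (N : nat) (P : bool -> bits N -> R) : Prop :=
  (forall a x, 0 <= P a x) /\ (forall x, P false x + P true x = 1).

Definition zero_str (N : nat) : bits N := [ffun _ => false].
Definition e_str (N : nat) (k : 'I_N) : bits N := [ffun i => i == k].

Definition in_J2 (R : numDomainType) (N : nat) (P : bool -> bits N -> R) : Prop :=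
  is_behavior P /\
  forall (S : {set 'I_N}), (2 < #|S|)%N ->
  forall x : bits N,
    \sum_(y : bits N | [forall i in ~: S, y i == x i])
       (-1) ^+ #|[set i in S | y i]| * P false y = 0.

Definition objective (R : numFieldType) (N : nat) (P : bool -> bits N -> R) : R :=
  (N.+1%:R)^-1 * P false (zero_str N)
  + (N.+1%:R)^-1 * \sum_(k < N) P true (e_str k)
  - N%:R / N.+1%:R.

(* Main.v *)
Require Import Defs.
From mathcomp Require Import all_boot all_order all_algebra.
From mathcomp Require Import ring lra zify.
Set Implicit Arguments. Unset Strict Implicit. Unset Printing Implicit Defensive.
Import Order.TTheory GRing.Theory Num.Theory.
Local Open Scope ring_scope.

Section Gen.
Variable T : finType.

Definition tog (a : T) (S : {set T}) := if a \in S then S :\ a else a |: S.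

Lemma in_tog a S i : (i \in tog a S) = if i == a then a \notin S else i \in S.
Proof.
rewrite /tog; case: (boolP (a \in S)) => aS; case: (eqVneq i a) => [->|ia];
  rewrite !inE ?eqxx ?ia ?(negPf ia) //=; by rewrite aS.
Qed.

Lemma togK a : involutive (tog a).
Proof.
move=> S; apply/setP => i; rewrite in_tog; case: (eqVneq i a) => [->|ia].
  by rewrite in_tog eqxx negbK.
by rewrite in_tog (negPf ia).
Qed.

Lemma tog_sign (R : pzRingType) a (B S : {set T}) : a \in B ->
  (-1) ^+ #|B :&: tog a S| = - (-1) ^+ #|B :&: S| :> R.
Proof.
move=> aB.
rewrite (cardsD1 a (B :&: tog a S)) (cardsD1 a (B :&: S)).
have -> : (B :&: tog a S) :\ a = (B :&: S) :\ a.
  apply/setP => i; rewrite !inE in_tog; case: (eqVneq i a) => //.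
rewrite !inE aB in_tog eqxx /=.
case: (a \in S) => /=; rewrite ?add0n ?add1n exprS; first by rewrite mulN1r opprK.
by rewrite mulN1r.
Qed.

Lemma sum_tog (R : numDomainType) a (P : pred {set T}) (h : {set T} -> R) :
  (forall S, P (tog a S) = P S) -> (forall S, h (tog a S) = - h S) ->
  \sum_(S | P S) h S = 0.
Proof.
move=> HP Hh.
have E : \sum_(S | P S) h S = \sum_(S | P (tog a S)) h (tog a S) := reindex_inj (can_inj (togK a)).
have E2 : \sum_(S | P S) h S = - \sum_(S | P S) h S.
  rewrite {1}E -sumrN; apply: eq_big => S; [by rewrite HP | by rewrite Hh].
move/eqP: E2; rewrite -subr_eq0 opprK -mulr2n mulrn_eq0 /=.
by move/eqP.
Qed.

Lemma alt_count (R : pzRingType) (A : {set T}) (m : nat) :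
  \sum_(V : {set T} | (V \subset A) && (#|V| <= m)%N) (-1) ^+ #|V|
  = \sum_(k < m.+1) (-1) ^+ k * ('C(#|A|, k))%:R :> R.
Proof.
have gen k : \sum_(V : {set T} | (V \subset A) && (#|V| == k)) (-1) ^+ #|V|
             = (-1) ^+ k * ('C(#|A|, k))%:R :> R.
  rewrite (eq_bigr (fun _ => (-1) ^+ k)); last by move=> V /andP[_ /eqP ->].
  rewrite -(cards_draws A k) mulr_natr -sumr_const; apply: eq_bigl => V.
  by rewrite inE.
elim: m => [|m IH].
  rewrite big_ord_recr big_ord0 /= -gen.
  rewrite [LHS](_ : _ = \sum_(V : {set T} | (V \subset A) && (#|V| == 0%N)) (-1) ^+ #|V|).
    by rewrite add0r.
  by apply: eq_bigl => V; case: #|V|; rewrite ?andbT ?andbF.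
rewrite big_ord_recr /= -IH -gen.
rewrite [LHS](bigID (fun V : {set T} => (#|V| <= m)%N)) /=.
congr (_ + _); apply: eq_bigl => V.
  by case: (V \subset A) => //=; rewrite andb_idl // => H; apply: leqW.
by case: (V \subset A) => //=; rewrite eqn_leq ltnNge.
Qed.


Lemma tog_signT (R : pzRingType) a (S : {set T}) :
  (-1) ^+ #|tog a S| = - (-1) ^+ #|S| :> R.
Proof. by rewrite -[tog a S]setTI -[S in RHS]setTI tog_sign ?inE. Qed.

Lemma mobT (R : numDomainType) (F : {set T} -> R) :
  \sum_(S : {set T}) (-1) ^+ #|S| * \sum_(U : {set T} | U \subset S) (-1) ^+ #|U| * F U
  = F setT.
Proof.
under eq_bigr do rewrite big_distrr.
rewrite (exchange_big_dep predT) //=.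
under eq_bigr do rewrite -mulr_suml.
rewrite [LHS](bigD1 setT) //= [X in _ + X]big1 ?addr0.
  rewrite (big_pred1 setT); last by move=> S; rewrite /= subTset.
  by rewrite mulrA -expr2 sqrr_sign mul1r.
move=> U UT.
have [a _ aU] : exists2 a, a \in setT & a \notin U.
  by apply/subsetPn; rewrite subTset.
rewrite (@sum_tog R a) ?mul0r //.
  move=> S; apply/subsetP/subsetP => H i iU; move: (H i iU); rewrite in_tog;
  (case: (eqVneq i a) => [eia|//]); by move: aU; rewrite -eia iU.
by move=> S; rewrite tog_signT.
Qed.

Lemma sum_card1 (R : pzRingType) (h : {set T} -> R) :
  \sum_(U : {set T} | #|U| == 1%N) h U = \sum_(k : T) h [set k].
Proof.
have inj : {in predT &, injective (@set1 T)} by move=> x y _ _ /set1_inj.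
rewrite -(big_imset h inj); apply: eq_bigl => U.
apply/cards1P/imsetP => [[x ->]|[x _ ->]]; by exists x.
Qed.

End Gen.

Definition s2b (T : finType) (U : {set T}) : {ffun T -> bool} := [ffun i => i \in U].

Lemma sum_bits (R : pzRingType) (T : finType) (P : pred {ffun T -> bool}) (G : {ffun T -> bool} -> R) :
  \sum_(y | P y) G y = \sum_(U : {set T} | P (s2b U)) G (s2b U).
Proof.
apply: (reindex (@s2b T)).
exists (fun y : {ffun T -> bool} => [set i | y i]) => [U _|y _].
  by apply/setP => i; rewrite inE ffunE.
by apply/ffunP => i; rewrite ffunE inE.
Qed.


Lemma bin2R (R : pzRingType) (m : nat) : 'C(m.+1, 2)%:R = m%:R + 'C(m, 2)%:R :> R.
Proof. by rewrite binS bin1 natrD addrC. Qed.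

Lemma alt2 (R : pzRingType) (T : finType) (A : {set T}) :
  \sum_(V : {set T} | (V \subset A) && (#|V| <= 2)%N) (-1) ^+ #|V|
  = 1 - #|A|%:R + 'C(#|A|, 2)%:R :> R.
Proof.
rewrite alt_count !big_ord_recr big_ord0 /= bin0 bin1 add0r expr0 mul1r expr1.
by rewrite -signr_odd /= expr0 mul1r mulN1r.
Qed.

Lemma key_identity (R : realFieldType) (N : nat) (F : {set 'I_N} -> R) :
  (forall S : {set 'I_N}, (2 < #|S|)%N -> \sum_(U : {set 'I_N} | U \subset S) (-1) ^+ #|U| * F U = 0) ->
  F setT = \sum_(U : {set 'I_N})
     (\sum_(S : {set 'I_N} | (#|S| <= 2)%N && (U \subset S)) (-1) ^+ #|S|) * ((-1) ^+ #|U| * F U).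
Proof.
move=> g0.
rewrite -mobT (bigID (fun S : {set 'I_N} => (#|S| <= 2)%N)) /= [X in _ + X]big1 ?addr0; last first.
  by move=> S HS; rewrite g0 ?mulr0 // ltnNge.
under eq_bigr do rewrite big_distrr.
rewrite (exchange_big_dep predT) //=.
by under eq_bigr do rewrite -mulr_suml.
Qed.

Lemma lower_bound (R : realFieldType) (n : nat) (F : {set 'I_n.+1} -> R) :
  (forall U, 0 <= F U) ->
  (1 - n.+1%:R + 'C(n.+1, 2)%:R) * F set0 - (n%:R - 1) * \sum_(k < n.+1) F [set k]
  <= \sum_(U : {set 'I_n.+1})
     (\sum_(S : {set 'I_n.+1} | (#|S| <= 2)%N && (U \subset S)) (-1) ^+ #|S|) * ((-1) ^+ #|U| * F U).
Proof.
move=> F0.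
set c0 := (1 - _ + _).
pose L (U : {set 'I_n.+1}) := if U == set0 then c0 * F U
   else if #|U| == 1%N then - (n%:R - 1) * F U else 0.
have -> : c0 * F set0 - (n%:R - 1) * \sum_(k < n.+1) F [set k] = \sum_U L U.
  rewrite (bigD1 set0) //= /L eqxx; congr (_ + _).
  rewrite -mulNr mulr_sumr -(sum_card1 (fun U => - (n%:R - 1) * F U)).
  rewrite big_mkcond [RHS]big_mkcond /=; apply: eq_bigr => U _.
  case: (eqVneq U set0) => [->|//]; by rewrite cards0.
apply: ler_sum => U _; rewrite /L.
case: (eqVneq U set0) => [->|U0].
  rewrite cards0 expr0 mul1r; rewrite le_eqVlt; apply/orP; left; apply/eqP; congr (_ * _).
  rewrite /c0; have := alt2 R [set: 'I_n.+1]; rewrite cardsT card_ord => <-.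
  by apply: eq_bigl => S; rewrite sub0set subsetT andbT.
case: (boolP (#|U| == 1%N)) => [/cards1P [a ->]|U1].
  rewrite cards1 expr1; rewrite le_eqVlt; apply/orP; left; apply/eqP.
  have E := alt2 R [set: 'I_n.+1].
  rewrite (bigID (fun S : {set 'I_n.+1} => a \in S)) /= in E.
  have E2 := alt2 R [set~ a].
  rewrite cardsC1 card_ord /= in E2.
  rewrite ?cardsT ?card_ord in E.
  have -> : \sum_(S : {set 'I_n.+1} | (#|S| <= 2)%N && ([set a] \subset S)) (-1) ^+ #|S|
      = n%:R - 1 :> R.
    rewrite bin2R in E.
    have E3 : \sum_(i : {set 'I_n.+1} | ((i \subset [set: 'I_n.+1]) && (#|i| <= 2)%N) && (a \notin i)) (-1) ^+ #|i|
        = 1 - n%:R + 'C(n, 2)%:R :> R.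
      rewrite -E2; apply: eq_bigl => S.
      by rewrite subsetT /= subsetC sub1set !inE andbC.
    rewrite E3 in E.
    have E4 : \sum_(S : {set 'I_n.+1} | (#|S| <= 2)%N && ([set a] \subset S)) (-1) ^+ #|S|
        = \sum_(i : {set 'I_n.+1} | ((i \subset [set: 'I_n.+1]) && (#|i| <= 2)%N) && (a \in i)) (-1) ^+ #|i| :> R.
      by apply: eq_bigl => S; rewrite subsetT sub1set.
    rewrite E4.
    apply: (addIr (1 - n%:R + 'C(n, 2)%:R)); rewrite E -addn1 natrD; ring.
  ring.
rewrite /=.
have [U2|U3] := boolP (#|U| == 2%N).
  rewrite (big_pred1 U); last first.
    move=> S; rewrite /= eq_sym eqEcard (eqP U2) andbC //.
  by rewrite (eqP U2) sqrrN expr1n !mul1r F0.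
rewrite big_pred0 ?mul0r //=.
move=> S; apply/negP => /andP [HS HUS].
have H := leq_trans (subset_leq_card HUS) HS.
move: U0 U1 U3 H; rewrite -cards_eq0; case: #|U| => [|[|[|k]]] //.
Qed.

Lemma binR2 (R : comPzRingType) (m : nat) : 'C(m, 2)%:R * 2 = m%:R * (m%:R - 1) :> R.
Proof.
elim: m => [|m IH]; first by rewrite bin0n mul0r mul0r.
rewrite bin2R mulrDl IH -addn1 natrD; ring.
Qed.

Lemma part1 (R : realFieldType) (N : nat) (hN : (3 < N)%N)
  (P : bool -> {ffun 'I_N -> bool} -> R) : in_J2 P ->
  objective P <= 2 / ((N%:R - 2) * (N%:R - 1) * (N%:R + 1)).
Proof.
move: hN P. case: N => [|n] // hn P0 HP0. move: HP0 => [[Hpos Hsum] HJ].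
pose F U := P0 false (s2b U).
have F0 U : 0 <= F U by exact: Hpos.
have Ht x : P0 true x = 1 - P0 false x by rewrite -(Hsum x) addrC addKr.
have F1 : F setT <= 1.
  by rewrite /F -(Hsum (s2b setT)) lerDl.
have g0 : forall S : {set 'I_n.+1}, (2 < #|S|)%N ->
    \sum_(U : {set 'I_n.+1} | U \subset S) (-1) ^+ #|U| * F U = 0.
  move=> S HS; rewrite -[RHS](HJ S HS (zero_str _)) [RHS]sum_bits; apply: eq_big => U.
    apply/subsetP/forall_inP => H i.
      rewrite !ffunE inE => iS; case iU: (i \in U) => //.
      by rewrite (H i iU) in iS.
    move=> iU; apply/negPn/negP => iS.
    by have := H i; rewrite !inE iS !ffunE iU => /(_ isT).
  move=> HU; rewrite (_ : [set i in S | s2b U i] = U) //.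
  apply/setP => i; rewrite !inE ffunE; case iU: (i \in U); rewrite ?andbT ?andbF //.
  by rewrite (subsetP HU).
have := lower_bound F0; rewrite -key_identity // => Hlow.
have Fle := le_trans Hlow F1.
rewrite /objective.
have -> : zero_str n.+1 = s2b set0 by apply/ffunP => i; rewrite !ffunE inE.
have -> : \sum_(k < n.+1) P0 true (e_str k) = n.+1%:R - \sum_(k < n.+1) F [set k].
  rewrite (eq_bigr (fun k => 1 - F [set k])); last first.
    move=> k _; rewrite Ht; congr (1 - P0 false _).
    by apply/ffunP => i; rewrite !ffunE inE.
  by rewrite sumrB sumr_const card_ord.
set a := F set0 in Fle *.
set s := \sum_(k < n.+1) F [set k] in Fle *.
have hs : 0 <= s by apply: sumr_ge0.
have hC := binR2 R n.+1.
set C := 'C(n.+1, 2)%:R in Fle hC.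
set x := n.+1%:R in Fle hC *.
have -> : n.+2%:R = x + 1 by rewrite /x -addn1 natrD.
have hx : 4 <= x by rewrite /x (ler_nat R 4 n.+1).
have hn1 : n%:R = x - 1 by rewrite /x -addn1 natrD addrK.
rewrite hn1 in Fle.
have key : (a - s) * ((x - 2) * (x - 1)) <= 2.
  have h3 : 0 <= (x - 2) * (x - 3) * s by rewrite !mulr_ge0 // subr_ge0; lra.
  nra.
rewrite -subr_ge0.
have -> : 2 / ((x - 2) * (x - 1) * (x + 1)) -
    ((x + 1)^-1 * a + (x + 1)^-1 * (x - s) - x / (x + 1))
    = (2 - (a - s) * ((x - 2) * (x - 1))) / ((x - 2) * (x - 1) * (x + 1)).
  field; rewrite hn1; apply/and3P; split; apply/eqP; lra.
apply: divr_ge0; first by rewrite subr_ge0.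
by rewrite !mulr_ge0 //; lra.
Qed.

Lemma sub_tog (T : finType) (a : T) (A U : {set T}) : a \notin A ->
  (A \subset tog a U) = (A \subset U).
Proof.
move=> aA; apply/subsetP/subsetP => H i iA; move: (H i iA); rewrite in_tog;
  (case: (eqVneq i a) => [eia|//]); by move: aA; rewrite -eia iA.
Qed.

Lemma wbounds (R : realFieldType) (w N : nat) : (w <= N)%N -> (3 < N)%N ->
  0 <= (w%:R - 1) * (w%:R - 2) :> R /\ (w%:R - 1) * (w%:R - 2) <= (N%:R - 1) * (N%:R - 2) :> R.
Proof.
move=> hw hN.
have hn : 4 <= N%:R :> R by rewrite (ler_nat R 4 N).
have hwn : w%:R <= N%:R :> R by rewrite ler_nat.
case: w hw hwn => [|[|w]] hw hwn.
- split; first by nra. nra.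
- split; first by nra. nra.
- have h2 : 2 <= w.+2%:R :> R by rewrite (ler_nat R 2 w.+2).
  split; first by nra.
  nra.
Qed.

Definition kap (R : pzRingType) (T : finType) (U : {set T}) : R :=
  \sum_(V : {set T} | (V \subset U) && (#|V| <= 2)%N) (-1) ^+ #|V|.

Lemma kapE (R : realFieldType) (T : finType) (U : {set T}) :
  kap R U = (#|U|%:R - 1) * (#|U|%:R - 2) / 2.
Proof.
rewrite /kap alt2.
have := binR2 R #|U|; set C := 'C(_, _)%:R => hC.
have -> : C = C * 2 / 2 by rewrite mulfK // pnatr_eq0.
by rewrite hC; field.
Qed.

Lemma part2 (R : realFieldType) (N : nat) (hN : (3 < N)%N) :
  exists P : bool -> {ffun 'I_N -> bool} -> R,
     [/\ in_J2 P,
         objective P = 2 / ((N%:R - 2) * (N%:R - 1) * (N%:R + 1)),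
         P false (zero_str N) = 2 / (N%:R ^+ 2 - 3 * N%:R + 2)
       & forall k : 'I_N, P true (e_str k) = 1].
Proof.
set a0 := 2 / (N%:R ^+ 2 - 3 * N%:R + 2) : R.
pose f (y : {ffun 'I_N -> bool}) := a0 * kap R [set i | y i].
exists (fun b y => if b then 1 - f y else f y).
have hn : 4 <= N%:R :> R by rewrite (ler_nat R 4 N).
have hd : 0 < (N%:R - 1) * (N%:R - 2) :> R by nra.
have fE y : f y = (#|[set i | y i]|%:R - 1) * (#|[set i | y i]|%:R - 2) / ((N%:R - 1) * (N%:R - 2)).
  rewrite /f /a0 kapE; field; apply/and3P; split; apply/eqP; nra.
have hz : f (zero_str N) = a0.
  by rewrite /f (_ : [set i | zero_str N i] = set0) /kap ?alt2 ?cards0 ?mulr1;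
    [rewrite bin0n subr0 addr0 mulr1 | apply/setP => i; rewrite !inE ffunE].
have he k : f (e_str k) = 0.
  rewrite /f (_ : [set i | e_str k i] = [set k]).
    by rewrite /kap alt2 cards1 subrr add0r mulr0.
  by apply/setP => i; rewrite !inE ffunE.
split.
- split.
    split => [b y|y]; last by rewrite addrC subrK.
    have := max_card [set i | y i]; rewrite card_ord => hmax.
    have [h1 h2] := wbounds R hmax hN.
    case: b; rewrite fE ?subr_ge0.
      by rewrite ler_pdivrMr // mul1r.
    by apply: divr_ge0 => //; apply: ltW.
  move=> S HS x.
  rewrite sum_bits /=.
  have E U : (-1) ^+ #|[set i in S | s2b U i]| * f (s2b U)
      = \sum_(V : {set 'I_N} | (V \subset U) && (#|V| <= 2)%N)
          (-1) ^+ #|S :&: U| * a0 * (-1) ^+ #|V|.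
    rewrite /f -big_distrr /= mulrA.
    have -> : [set i in S | s2b U i] = S :&: U by apply/setP => i; rewrite !inE ffunE.
    have -> : [set i | s2b U i] = U by apply/setP => i; rewrite !inE ffunE.
    by [].
  under eq_bigr do rewrite E.
  rewrite (exchange_big_dep (fun V : {set 'I_N} => (#|V| <= 2)%N)) /=; last first.
    by move=> U V _ /andP[].
  apply: big1 => V hV.
  have [a aS aV] : exists2 a, a \in S & a \notin V.
    apply/subsetPn; apply/negP => /subset_leq_card hSV.
    by have := leq_trans hSV hV; rewrite leqNgt HS.
  apply: (sum_tog (a := a)) => U.
    congr (_ && _); last by rewrite sub_tog.
    apply: eq_forallb => i; rewrite !ffunE in_tog.
    case: (eqVneq i a) => [->|//]; by rewrite inE aS.
  by rewrite tog_sign // !mulNr.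
- rewrite /objective /= hz (eq_bigr (fun _ => 1)); last by move=> k _; rewrite he subr0.
  rewrite sumr_const card_ord /a0.
  have -> : N.+1%:R = N%:R + 1 :> R by rewrite -addn1 natrD.
  field; apply/and4P; split; apply/eqP; nra.
- exact: hz.
- by move=> k; rewrite he subr0.
Qed.

Theorem theorem2 (R : realFieldType) (N : nat) (hN : (3 < N)%N) :
  (forall P : bool -> {ffun 'I_N -> bool} -> R, in_J2 P ->
     objective P <= 2 / ((N%:R - 2) * (N%:R - 1) * (N%:R + 1))) /\
  (exists P : bool -> {ffun 'I_N -> bool} -> R,
     [/\ in_J2 P,
         objective P = 2 / ((N%:R - 2) * (N%:R - 1) * (N%:R + 1)),
         P false (zero_str N) = 2 / (N%:R ^+ 2 - 3 * N%:R + 2)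
       & forall k : 'I_N, P true (e_str k) = 1]).
Proof.
split; [exact: part1 | exact: part2].
Qed.
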